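(* Let $\mathcal{C}$ be a 3XOR instance on variable set $\mathcal{X}$ and suppose every SOS refutation of $\mathcal{C}$ requires degree exceeding $r$ (i.e. a degree-$r$ pseudo-expectation operator for $\mathcal{C}$ exists). Then every SOS refutation of the statement ''$G_{\mathcal{C}}$ and $G_{\mathcal{C}^0}$ are isomorphic'' requires degree exceeding $r/3$.
   Context: A 3XOR instance $\mathcal{C}$ over $\mathcal{X}$ consists of equations $x_{j_1}+x_{j_2}+x_{j_3}=b$ over $\mathbb{Z}_2$ on three distinct variables; $\mathcal{C}^0$ replaces every right-hand side by $0$. Graph $G_{\mathcal{C}}$: for each variable $x$, two variable vertices $x\mapsto 0,x\mapsto 1$ joined by an edge; for each equation $C$ on $x_1,x_2,x_3$, four constraint vertices $\alpha_C$, one per satisfying assignment $\alpha=(x_1\mapsto a_1,x_2\mapsto a_2,x_3\mapsto a_3)$ of $C$, forming a clique, each adjacent to the variable vertices $x_i\mapsto a_i$; variable vertices are shared across constraints, constraint vertices are not. SOS for 3XOR: a degree-$r$ pseudo-expectation for $\mathcal{C}$ is a linear functional $\tilde{E}$ on real polynomials of degree at most $r$ in indeterminates $A[x\mapsto a]$ ($x\in\mathcal{X},a\in\mathbb{Z}_2$) with $\tilde{E}[1]=1$ and, for all polynomials $q$ with the product of degree at most $r$: $\tilde{E}[(A[x\mapsto a]^2-A[x\mapsto a])q]=0$; $\tilde{E}[(A[x\mapsto 0]+A[x\mapsto 1]-1)q]=0$; for each $C\in\mathcal{C}$ on $x_1,x_2,x_3$, $\tilde{E}[(\sum_{\alpha\text{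 satisfying }C}A[x_1\mapsto\alpha(x_1)]A[x_2\mapsto\alpha(x_2)]A[x_3\mapsto\alpha(x_3)]-1)q]=0$; and $\tilde{E}[p^2]\ge0$ for all $p$ of degree at most $r/2$. A degree-$r$ SOS refutation exists iff no such operator exists. SOS for isomorphism of $G,H$ ($|V(G)|=|V(H)|$, $|E(G)|=|E(H)|$): a degree-$r$ pseudo-expectation is a linear functional $\tilde{E}$ on polynomials of degree at most $r$ in indeterminates $\Pi[u\mapsto v]$ ($u\in V(G)$, $v\in V(H)$) with $\tilde{E}[1]=1$ and, for all polynomials with products of degree at most $r$: $\tilde{E}[(\Pi[u\mapsto v]^2-\Pi[u\mapsto v])q]=0$; $\tilde{E}[(\sum_{v}\Pi[u\mapsto v]-1)q]=0$ for each $u$ and $\tilde{E}[(\sum_u\Pi[u\mapsto v]-1)q]=0$ for each $v$; $\tilde{E}[(\sum_{\{u,u'\}\in E(G)}\sum_{v,v':\{v,v'\}\in E(H)}\Pi[u\mapsto v]\Pi[u'\mapsto v']-|E(G)|)p^2]\ge0$; $\tilde{E}[p^2]\ge 0$ for $\deg p\le r/2$. A degree-$r$ SOS refutation of isomorphism exists iff no such operator exists. *)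

(* Defs.v *)
From HB Require Import structures.
From mathcomp Require Import all_boot all_order all_algebra.
From mathcomp Require Import mpoly.
From mathcomp Require Import reals.

Set Implicit Arguments.
Unset Strict Implicit.
Unset Printing Implicit Defensive.

Import Order.TTheory GRing.Theory Num.Theory.
Local Open Scope ring_scope.

Definition polyT (R : nzRingType) (T : finType) := {mpoly R[#|T|]}.

Definition ind (R : nzRingType) (T : finType) (t : T) : polyT R T :=
  'X_(enum_rank t).

(* total degree (degree of 0 is 0) *)
Definition pdeg (R : nzRingType) (T : finType) (p : polyT R T) : nat :=
  (msize p).-1.

Definition linear_functional (R : nzRingType) (T : finType)
  (E : polyT R T -> R) : Prop :=
  forall (a : R) (p q : polyT R T), E (a *: p + q) = a * E p + E q.

(* An instance over variables X is a finite family of equations        *)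
(* indexed by C: equation c is  x_{vars c 0} + x_{vars c 1} +          *)
(* x_{vars c 2} = rhs c  over Z_2 (bool with addb).                    *)

Definition sat3 (b : bool) (alpha : {ffun 'I_3 -> bool}) : bool :=
  (alpha ord0 (+) alpha (@Ordinal 3 1 isT) (+) alpha (@Ordinal 3 2 isT)) == b.

Definition xor_poly (R : nzRingType) (X C : finType)
  (vars : C -> 'I_3 -> X) (rhs : C -> bool) (c : C) : polyT R (X * bool)%type :=
  \sum_(alpha : {ffun 'I_3 -> bool} | sat3 (rhs c) alpha)
     \prod_(i < 3) @ind R (X * bool)%type (vars c i, alpha i).

Definition xor_pseudo_exp (R : realType) (X C : finType)
  (vars : C -> 'I_3 -> X) (rhs : C -> bool) (r : nat)
  (E : polyT R (X * bool)%type -> R) : Prop :=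
  let A := fun x a => @ind R (X * bool)%type (x, a) in
  linear_functional E /\
      E 1 = 1 /\
      (forall x a (q : polyT R (X * bool)%type),
          leq (pdeg ((A x a ^+ 2 - A x a) * q)) r ->
          E ((A x a ^+ 2 - A x a) * q) = 0) /\
      (forall x (q : polyT R (X * bool)%type),
          leq (pdeg ((A x false + A x true - 1) * q)) r ->
          E ((A x false + A x true - 1) * q) = 0) /\
      (forall c (q : polyT R (X * bool)%type),
          leq (pdeg ((xor_poly R vars rhs c - 1) * q)) r ->
          E ((xor_poly R vars rhs c - 1) * q) = 0) /\
      (forall p : polyT R (X * bool)%type,
          leq (2 * pdeg p)%N r -> 0 <= E (p ^+ 2)).

Definition cvert (C : finType) (rhs : C -> bool) :=
  {p : (C * {ffun 'I_3 -> bool})%type | sat3 (rhs p.1) p.2}.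

Definition gvert (X C : finType) (rhs : C -> bool) :=
  ((X * bool) + cvert rhs)%type.

Definition gadj (X C : finType) (vars : C -> 'I_3 -> X) (rhs : C -> bool)
  (u v : gvert X rhs) : bool :=
  match u, v with
  | inl (x, a), inl (y, b) => (x == y) && (a != b)
  | inr s, inr t => ((sval s).1 == (sval t).1) && ((sval s).2 != (sval t).2)
  | inl (x, a), inr t =>
      [exists i : 'I_3, (vars (sval t).1 i == x) && ((sval t).2 i == a)]
  | inr s, inl (x, a) =>
      [exists i : 'I_3, (vars (sval s).1 i == x) && ((sval s).2 i == a)]
  end.

Definition rhs0 (C : finType) : C -> bool := fun _ => false.

(* A graph is given by a finite vertex type and a symmetric irreflexive*)
(* adjacency relation.  Indeterminates Pi[u |-> v] indexed by VG * VH. *)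

Definition nedges (V : finType) (e : rel V) : nat :=
  #|[set p : (V * V)%type | e p.1 p.2]|./2.

Definition iso_pseudo_exp (R : realType) (VG VH : finType)
  (eG : rel VG) (eH : rel VH) (r : nat)
  (E : polyT R (VG * VH)%type -> R) : Prop :=
  let Pi := fun u v => @ind R (VG * VH)%type (u, v) in
  (* sum over unordered edges {u,u'} of G and ordered (v,v') with {v,v'}
     an edge of H; over ordered pairs (u,u') each unordered edge of G is
     counted twice (the summand is symmetric under u <-> u'), hence 1/2 *)
  let S := 2%:R^-1 * \sum_(u : VG) \sum_(u' : VG | eG u u')
             \sum_(v : VH) \sum_(v' : VH | eH v v') Pi u v * Pi u' v' in
  linear_functional E /\
      E 1 = 1 /\
      (forall u v (q : polyT R (VG * VH)%type),
          leq (pdeg ((Pi u v ^+ 2 - Pi u v) * q)) r ->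
          E ((Pi u v ^+ 2 - Pi u v) * q) = 0) /\
      (forall u (q : polyT R (VG * VH)%type),
          leq (pdeg ((\sum_v Pi u v - 1) * q)) r ->
          E ((\sum_v Pi u v - 1) * q) = 0) /\
      (forall v (q : polyT R (VG * VH)%type),
          leq (pdeg ((\sum_u Pi u v - 1) * q)) r ->
          E ((\sum_u Pi u v - 1) * q) = 0) /\
      (forall p : polyT R (VG * VH)%type,
          leq (pdeg ((S - (nedges eG)%:R) * p ^+ 2)) r ->
          0 <= E ((S - (nedges eG)%:R) * p ^+ 2)) /\
      (forall p : polyT R (VG * VH)%type,
          leq (2 * pdeg p)%N r -> 0 <= E (p ^+ 2)).

(* Main.v *)
Require Import Defs.
From HB Require Import structures.
From mathcomp Require Import all_boot all_order all_algebra.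
From mathcomp Require Import mpoly.
From mathcomp Require Import reals.
From mathcomp Require Import zify ring lra.
Set Implicit Arguments.
Unset Strict Implicit.
Unset Printing Implicit Defensive.
Import Order.TTheory GRing.Theory Num.Theory.
Local Open Scope ring_scope.


Section Deg.
Variables (R : realType) (T : finType).
Notation P := (polyT R T).
Implicit Types p q : P.

Lemma pdegM_eq p q : p != 0 -> q != 0 -> pdeg (p * q)%R = (pdeg p + pdeg q)%N.
Proof.
move=> hp hq; rewrite /pdeg msizeM //.
have := msize_poly_eq0 p; have := msize_poly_eq0 q; rewrite (negbTE hp) (negbTE hq).
case: (msize q) => // b _; case: (msize p) => // a _ /=.
by rewrite ?addSn ?addnS /=; lia.
Qed.

Lemma pdegM p q : (pdeg (p * q)%R <= pdeg p + pdeg q)%N.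
Proof.
have [->|hp] := eqVneq p 0; first by rewrite mul0r /pdeg msize0.
have [->|hq] := eqVneq q 0; first by rewrite mulr0 /pdeg msize0.
by rewrite pdegM_eq.
Qed.

Lemma pdegD p q : (pdeg (p + q)%R <= maxn (pdeg p) (pdeg q))%N.
Proof.
rewrite /pdeg; have := msizeD_le p q.
case: (msize (p+q)) => //= a; case: (msize p) => [|b]; case: (msize q) => [|c] //=;
 rewrite ?maxn0 ?max0n //= => h; rewrite -ltnS; apply: leq_trans h _;
 by rewrite -(maxnSS).
Qed.

Lemma pdegN p : pdeg (- p) = pdeg p.
Proof. by rewrite /pdeg msizeN. Qed.

Lemma pdegZ (a : R) p : (pdeg (a *: p)%R <= pdeg p)%N.
Proof. by rewrite /pdeg -!subn1 leq_sub2r // msizeZ_le. Qed.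

Lemma pdegC (a : R) : pdeg (a%:MP : P) = 0%N.
Proof. by rewrite /pdeg msizeC; case: (a != 0). Qed.

Lemma pdeg1 : @pdeg R T 1 = 0%N.
Proof. by rewrite /pdeg msize1. Qed.

Lemma pdeg_ind (t : T) : pdeg (ind R t) = 1%N.
Proof. by rewrite /pdeg /ind msizeX mdeg1. Qed.

Lemma pdeg_sum (I : Type) (s : seq I) (Pr : pred I) (F : I -> P) k :
  (forall i, Pr i -> (pdeg (F i) <= k)%N) -> (pdeg (\sum_(i <- s | Pr i) F i)%R <= k)%N.
Proof.
move=> h; elim/big_rec: _ => [|i x Pi hx]; first by rewrite /pdeg msize0.
by apply: leq_trans (pdegD _ _) _; rewrite geq_max h.
Qed.

Lemma pdeg_prod (I : Type) (s : seq I) (Pr : pred I) (F : I -> P) :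
  (pdeg (\prod_(i <- s | Pr i) F i)%R <= \sum_(i <- s | Pr i) pdeg (F i))%N.
Proof.
elim/big_rec2: _ => [|i k x Pi hx]; first by rewrite pdeg1.
by apply: leq_trans (pdegM _ _) _; rewrite leq_add2l.
Qed.

Lemma pdegX p k : (pdeg (p ^+ k)%R <= k * pdeg p)%N.
Proof.
elim: k => [|k ih]; first by rewrite expr0 pdeg1.
by rewrite exprS; apply: leq_trans (pdegM _ _) _; rewrite mulSn leq_add2l.
Qed.

End Deg.


Section Good.
Variables (R : realType) (T : finType) (E : polyT R T -> R) (r : nat).
Hypothesis Elin : linear_functional E.
Notation P := (polyT R T).
Implicit Types f g q : P.

Lemma E0 : E 0 = 0.
Proof. have := Elin 1 0 0; rewrite scale1r !addr0 mul1r => h. by apply: (addrI (E 0)); rewrite addr0 -h. Qed.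
Lemma ED f g : E (f + g) = E f + E g.
Proof. by have := Elin 1 f g; rewrite scale1r mul1r. Qed.
Lemma EZ a f : E (a *: f) = a * E f.
Proof. by have := Elin a f 0; rewrite !addr0 E0 addr0. Qed.
Lemma EN f : E (- f) = - E f.
Proof. by rewrite -scaleN1r EZ mulN1r. Qed.
Lemma EB f g : E (f - g) = E f - E g.
Proof. by rewrite ED EN. Qed.
Lemma Esum (I : Type) (s : seq I) (Pr : pred I) (F : I -> P) :
  E (\sum_(i <- s | Pr i) F i) = \sum_(i <- s | Pr i) E (F i).
Proof. by elim/big_rec2: _ => [|i y x _ <-]; rewrite ?E0 // ED. Qed.

Definition good k f := forall q, (pdeg q + k <= r)%N -> E (f * q) = 0.

Lemma good0 k : good k 0.
Proof. by move=> q _; rewrite mul0r E0. Qed.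
Lemma goodD k f g : good k f -> good k g -> good k (f + g).
Proof. by move=> hf hg q hq; rewrite mulrDl ED hf // hg // addr0. Qed.
Lemma goodN k f : good k f -> good k (- f).
Proof. by move=> hf q hq; rewrite mulNr EN hf // oppr0. Qed.
Lemma goodB k f g : good k f -> good k g -> good k (f - g).
Proof. by move=> hf hg; apply: goodD => //; apply: goodN. Qed.
Lemma goodZ k a f : good k f -> good k (a *: f).
Proof. by move=> hf q hq; rewrite -scalerAl EZ hf // mulr0. Qed.
Lemma good_sum k (I : Type) (s : seq I) (Pr : pred I) (F : I -> P) :
  (forall i, Pr i -> good k (F i)) -> good k (\sum_(i <- s | Pr i) F i).
Proof. by move=> h; elim/big_rec: _ => [|i x Pi hx]; [apply: good0 | apply: goodD => //; apply: h]. Qed.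
Lemma good_weak k k' f : (k <= k')%N -> good k f -> good k' f.
Proof. by move=> hk hf q hq; apply: hf; apply: leq_trans hq; rewrite leq_add2l. Qed.
Lemma goodMr k j f g : good k f -> (pdeg g <= j)%N -> good (k + j) (f * g).
Proof.
move=> hf hg q hq; rewrite -mulrA; apply: hf.
have := pdegM g q; lia.
Qed.
Lemma goodMl k j f g : good k f -> (pdeg g <= j)%N -> good (k + j) (g * f).
Proof. by rewrite mulrC; apply: goodMr. Qed.
Lemma good_gen k f : (forall q, (pdeg (f * q)%R <= r)%N -> E (f * q) = 0) ->
  (pdeg f <= k)%N -> good k f.
Proof.
move=> h hf q hq; apply: h; have := pdegM f q; lia.
Qed.
End Good.


Section Main.
Variables (R : realType) (X C : finType) (vars : C -> 'I_3 -> X) (rhs : C -> bool).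
Variables (r : nat) (E : polyT R (X * bool)%type -> R).
Hypothesis hE : xor_pseudo_exp vars rhs r E.
Notation XB := (X * bool)%type.
Notation P := (polyT R XB).
Definition A (x : X) (a : bool) : P := ind R ((x, a) : XB).
Notation good := (@good R XB E r).

Lemma Elin : linear_functional E. Proof. by case: hE. Qed.

Lemma pdegA x a : pdeg (A x a) = 1%N. Proof. exact: pdeg_ind. Qed.

Lemma gA2 x a : good 2 (A x a ^+ 2 - A x a).
Proof.
apply: good_gen; first by move=> q hq; case: hE => _ [_ [h _]]; apply: h.
apply: leq_trans (pdegD _ _) _; rewrite pdegN geq_max pdegA andbT.
by apply: leq_trans (pdegX _ _) _; rewrite pdegA.
Qed.

Lemma gS x : good 1 (A x false + A x true - 1).
Proof.
apply: good_gen; first by move=> q hq; case: hE => _ [_ [_ [h _]]]; apply: h.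
apply: leq_trans (pdegD _ _) _; rewrite pdegN pdeg1 geq_max andbT.
by apply: leq_trans (pdegD _ _) _; rewrite !pdegA.
Qed.

Definition Mon (c : C) (g : {ffun 'I_3 -> bool}) : P :=
  \prod_(i < 3) A (vars c i) (g i).

Lemma pdegMon c g : (pdeg (Mon c g) <= 3)%N.
Proof.
apply: leq_trans (pdeg_prod _ _ _) _.
under eq_bigr do rewrite pdegA. by rewrite sum_nat_const card_ord.
Qed.

Lemma xor_polyE c : xor_poly R vars rhs c = \sum_(g | sat3 (rhs c) g) Mon c g.
Proof. by []. Qed.

Lemma gX c : good 3 (xor_poly R vars rhs c - 1).
Proof.
apply: good_gen; first by move=> q hq; case: hE => _ [_ [_ [_ [h _]]]]; apply: h.
apply: leq_trans (pdegD _ _) _; rewrite pdegN pdeg1 geq_max andbT xor_polyE.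
by apply: pdeg_sum => g _; apply: pdegMon.
Qed.

Lemma gAA x a : good 2 (A x a * A x (~~ a)).
Proof.
have -> : A x a * A x (~~ a) = A x a * (A x false + A x true - 1) - (A x a ^+ 2 - A x a).
  by case: a; ring.
apply: goodB; first exact: Elin.
  apply: (@goodMl R XB E r 1 1); [exact: gS | by rewrite pdegA].
exact: gA2.
Qed.


Definition xorf (a b : {ffun 'I_3 -> bool}) : {ffun 'I_3 -> bool} :=
  [ffun i => a i (+) b i].
Definition par (g : {ffun 'I_3 -> bool}) : bool :=
  g ord0 (+) g (@Ordinal 3 1 isT) (+) g (@Ordinal 3 2 isT).
Lemma sat3E b g : sat3 b g = (par g == b). Proof. by []. Qed.
Lemma par_xorf a b : par (xorf a b) = par a (+) par b.
Proof.
rewrite /par !ffunE.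
by case: (a ord0); case: (a (Ordinal _)); case: (a (Ordinal _));
   case: (b ord0); case: (b (Ordinal _)); case: (b (Ordinal _)).
Qed.
Lemma xorf_inj a : injective (xorf a).
Proof. by move=> b b' /ffunP h; apply/ffunP => i; have := h i; rewrite !ffunE => /addbI. Qed.
Lemma xorf_injr b : injective (xorf ^~ b).
Proof. by move=> a a' /ffunP h; apply/ffunP => i; have := h i; rewrite !ffunE => /addIb. Qed.

Lemma xorfK a b : xorf a (xorf a b) = b.
Proof. by apply/ffunP => i; rewrite !ffunE addKb. Qed.
Lemma xorfKr a b : xorf (xorf a b) b = a.
Proof. by apply/ffunP => i; rewrite !ffunE addbK. Qed.

Notation VG := (gvert X rhs).
Notation VH := (gvert X (@rhs0 C)).

Definition hPi (u : VG) (v : VH) : P :=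
  match u, v with
  | inl p, inl p' => if p.1 == p'.1 then A p.1 (p.2 (+) p'.2) else 0
  | inr s, inr t => if (sval s).1 == (sval t).1
                    then Mon (sval s).1 (xorf (sval s).2 (sval t).2) else 0
  | _, _ => 0
  end.

Lemma pdeg_hPi u v : (pdeg (hPi u v) <= 3)%N.
Proof.
case: u => [p|s]; case: v => [p'|t] /=; try by rewrite /pdeg msize0.
- by case: ifP => _; [rewrite pdegA | rewrite /pdeg msize0].
- by case: ifP => _; [apply: pdegMon | rewrite /pdeg msize0].
Qed.

Lemma sum_cvert (rh : C -> bool) (F : (C * {ffun 'I_3 -> bool})%type -> P) :
  \sum_(t : cvert rh) F (sval t) = \sum_(p | sat3 (rh p.1) p.2) F p.
Proof.
rewrite (big_sub [pred p : (C * {ffun 'I_3 -> bool})%type | sat3 (rh p.1) p.2]).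
by [].
Qed.


Lemma sum_fst (rh : C -> bool) (c : C) (G : {ffun 'I_3 -> bool} -> P) :
  \sum_(p | sat3 (rh p.1) p.2) (if c == p.1 then G p.2 else 0)
  = \sum_(g | sat3 (rh c) g) G g.
Proof.
rewrite -(pair_big_dep xpredT (fun c' g => sat3 (rh c') g)
          (fun c' g => if c == c' then G g else 0)) /=.
rewrite (bigD1 c) //= [X in _ + X]big1 ?addr0; first by apply: eq_bigr => g _; rewrite eqxx.
by move=> c' hc'; apply: big1 => g _; rewrite eq_sym (negbTE hc').
Qed.

Lemma sum_fstr (rh : C -> bool) (c : C) (G : {ffun 'I_3 -> bool} -> P) :
  \sum_(p | sat3 (rh p.1) p.2) (if p.1 == c then G p.2 else 0)
  = \sum_(g | sat3 (rh c) g) G g.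
Proof. rewrite -(sum_fst rh c G); apply: eq_bigr => p _; by rewrite eq_sym. Qed.

Lemma sum_XB (x : X) (G : bool -> P) :
  \sum_(p : XB) (if x == p.1 then G p.2 else 0) = G true + G false.
Proof.
rewrite -(pair_bigA _ (fun y b => if x == y then G b else 0)) /=.
rewrite (bigD1 x) //= [X in _ + X]big1 ?addr0; first by rewrite big_bool eqxx.
by move=> y hy; apply: big1 => b _; rewrite eq_sym (negbTE hy).
Qed.

Lemma sum_XBr (x : X) (G : bool -> P) :
  \sum_(p : XB) (if p.1 == x then G p.2 else 0) = G true + G false.
Proof. rewrite -(sum_XB x G); apply: eq_bigr => p _; by rewrite eq_sym. Qed.

Lemma row_sum u : good 3 (\sum_v hPi u v - 1).
Proof.
rewrite big_sumType /=.
case: u => [[x a]|s] /=.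
- rewrite [X in _ + X - _]big1 // addr0. rewrite (sum_XB x (fun b => A x (a (+) b))).
  apply: (good_weak (k := 1)) => //.
  by case: a => /=; rewrite ?[A x true + _]addrC; apply: gS.
- rewrite big1 // add0r.
  rewrite (sum_cvert (@rhs0 C) (fun t : (C * {ffun 'I_3 -> bool})%type => if (sval s).1 == t.1
             then Mon (sval s).1 (xorf (sval s).2 t.2) else 0)).
  rewrite (sum_fst (@rhs0 C) (sval s).1 (fun g => Mon (sval s).1 (xorf (sval s).2 g))) /rhs0.
  have -> : \sum_(g | sat3 false g) Mon (sval s).1 (xorf (sval s).2 g)
            = xor_poly R vars rhs (sval s).1.
    rewrite xor_polyE (reindex_inj (@xorf_inj (sval s).2)) /=.
    apply: eq_big => g; last by move=> _; rewrite xorfK.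
    rewrite !sat3E par_xorf.
    case: s => [[c al]] /=; rewrite sat3E => /eqP ->.
    by case: (rhs c); case: (par g).
  exact: gX.
Qed.

Lemma col_sum v : good 3 (\sum_u hPi u v - 1).
Proof.
rewrite big_sumType /=.
case: v => [[y b]|t] /=.
- rewrite [X in _ + X - _]big1 // addr0 (eq_bigr (fun i : XB => if i.1 == y then A y (i.2 (+) b) else 0)); last by move=> i _; case: eqP => // ->.
  rewrite (sum_XBr y (fun a => A y (a (+) b))).
  apply: (good_weak (k := 1)) => //.
  by case: b => /=; rewrite ?[A y true + _]addrC; apply: gS.
- rewrite big1 // add0r.
  rewrite (sum_cvert rhs (fun s : (C * {ffun 'I_3 -> bool})%type => if s.1 == (sval t).1
             then Mon s.1 (xorf s.2 (sval t).2) else 0)).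
  have -> : \sum_(p | sat3 (rhs p.1) p.2) (if p.1 == (sval t).1
             then Mon p.1 (xorf p.2 (sval t).2) else 0)
          = \sum_(p | sat3 (rhs p.1) p.2) (if p.1 == (sval t).1
             then Mon (sval t).1 (xorf p.2 (sval t).2) else 0).
    by apply: eq_bigr => p _; case: eqP => // ->.
  rewrite (sum_fstr rhs (sval t).1 (fun g => Mon (sval t).1 (xorf g (sval t).2))).
  have -> : \sum_(g | sat3 (rhs (sval t).1) g) Mon (sval t).1 (xorf g (sval t).2)
            = xor_poly R vars rhs (sval t).1.
    rewrite xor_polyE (reindex_inj (@xorf_injr (sval t).2)) /=.
    apply: eq_big => g; last by move=> _; rewrite xorfKr.
    rewrite !sat3E par_xorf.
    case: t => [[c be]] /=; rewrite /rhs0 sat3E => /eqP ->.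
    by rewrite addbF.
  exact: gX.
Qed.


Lemma Mon_split c g i : exists h, Mon c g = A (vars c i) (g i) * h /\ (pdeg h <= 2)%N.
Proof.
exists (\prod_(j < 3 | j != i) A (vars c j) (g j)); split.
  by rewrite /Mon (bigD1 i).
apply: leq_trans (pdeg_prod _ _ _) _.
under eq_bigr do rewrite pdegA.
rewrite sum_nat_const.
have : #|[pred j : 'I_3 | j != i]| = 2%N.
  by rewrite cardC1 card_ord.
by move=> ->.
Qed.

Lemma good_Z x t h : (pdeg h <= 4)%N -> good 6 (A x t * A x (~~ t) * h).
Proof. by move=> hh; apply: (@goodMr R XB E r 2 4) => //; apply: gAA. Qed.

Lemma good0' k : good k 0.
Proof. apply: good0; exact: Elin. Qed.

Lemma local_mixed x a s y b t :
  gadj vars (inl (x, a) : VG) (inr s) -> ~~ gadj vars (inl (y, b) : VH) (inr t) ->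
  good 6 (hPi (inl (x, a)) (inl (y, b)) * hPi (inr s) (inr t)).
Proof.
rewrite /=; move=> /existsP [i /andP [/eqP hx /eqP ha]] hn.
case: (eqVneq x y) => [exy|nxy]; last by rewrite mul0r; apply: good0'.
case: (eqVneq (sval s).1 (sval t).1) => [est|nst]; last by rewrite mulr0; apply: good0'.
subst y.
have hb : (sval t).2 i = ~~ b.
  have hne : (sval t).2 i != b.
    apply: contra hn => hb.
    by apply/existsP; exists i; rewrite -est hx eqxx /=.
  by move: hne; case: ((sval t).2 i); case: (b).
have [h [-> hh]] := Mon_split (sval s).1 (xorf (sval s).2 (sval t).2) i.
rewrite ffunE hx ha hb /= mulrA.
have -> : a (+) ~~ b = ~~ (a (+) b) by rewrite addbN.
apply: good_Z; apply: leq_trans hh _; done.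
Qed.

Lemma local_var x a x' a' y b y' b' :
  gadj vars (inl (x, a) : VG) (inl (x', a')) -> ~~ gadj vars (inl (y, b) : VH) (inl (y', b')) ->
  good 6 (hPi (inl (x, a)) (inl (y, b)) * hPi (inl (x', a')) (inl (y', b'))).
Proof.
rewrite /= => /andP [/eqP <- haa] hn.
case: (eqVneq x y) => [exy|nxy]; last by rewrite mul0r; apply: good0'.
case: (eqVneq x y') => [exy'|nxy']; last by rewrite mulr0; apply: good0'.
subst y y'; move: hn; rewrite eqxx /= negbK => /eqP <-.
have -> : a' = ~~ a by move: haa; case: a; case: a'.
rewrite -[A x (a (+) b) * _]mulr1 addNb.
by apply: good_Z; rewrite pdeg1.
Qed.

Lemma local_con s s' t t' :
  gadj vars (inr s : VG) (inr s') -> ~~ gadj vars (inr t : VH) (inr t') ->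
  good 6 (hPi (inr s) (inr t) * hPi (inr s') (inr t')).
Proof.
rewrite /= => /andP [/eqP ess' hne] hn.
case: (eqVneq (sval s).1 (sval t).1) => [est|nst]; last by rewrite mul0r; apply: good0'.
case: (eqVneq (sval s').1 (sval t').1) => [est'|nst']; last by rewrite mulr0; apply: good0'.
have ett' : (sval t).1 = (sval t').1 by rewrite -est -est'.
move: hn; rewrite ett' eqxx /= negbK => /eqP ett2.
have [i hi] : exists i, (sval s).2 i != (sval s').2 i.
  apply/existsP; apply: contraR hne; rewrite negb_exists => /forallP h.
  by apply/eqP/ffunP => i; apply/eqP; have := h i; rewrite negbK.
have [h [-> hh]] := Mon_split (sval s).1 (xorf (sval s).2 (sval t).2) i.
have [h' [-> hh']] := Mon_split (sval s').1 (xorf (sval s').2 (sval t').2) i.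
rewrite -ess' !ffunE -ett2.
have -> : (sval s').2 i = ~~ (sval s).2 i by move: hi; case: ((sval s).2 i); case: ((sval s').2 i).
rewrite addNb.
have -> : forall p q h1 h2 : P, p * h1 * (q * h2) = p * q * (h1 * h2) by move=> *; ring.
apply: good_Z; apply: leq_trans (pdegM _ _) _; lia.
Qed.


Lemma local u u' v v' : gadj vars u u' -> ~~ gadj vars v v' ->
  good 6 (hPi u v * hPi u' v').
Proof.
case: u => [[x a]|s]; case: u' => [[x' a']|s'];
case: v => [[y b]|t]; case: v' => [[y' b']|t'];
  try (by move=> _ _; rewrite /= ?mul0r ?mulr0; apply: good0').
- exact: local_var.
- exact: local_mixed.
- by move=> h1 h2; rewrite mulrC; apply: local_mixed.
- exact: local_con.
Qed.

Lemma Tsum u u' : gadj vars u u' ->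
  good 6 (\sum_v \sum_(v' | gadj vars v v') (hPi u v * hPi u' v') - 1).
Proof.
move=> huu.
have e1 : \sum_v \sum_(v' | gadj vars v v') (hPi u v * hPi u' v')
   = \sum_v (hPi u v * \sum_v' hPi u' v')
     - \sum_v \sum_(v' | ~~ gadj vars v v') (hPi u v * hPi u' v').
  rewrite -sumrB; apply: eq_bigr => v _.
  by rewrite mulr_sumr [X in X - _](bigID (gadj vars v)) /= addrK.
have e2 : \sum_v (hPi u v * \sum_v' hPi u' v')
   = \sum_v (hPi u v * (\sum_v' hPi u' v' - 1)) + \sum_v hPi u v.
  by rewrite -big_split /=; apply: eq_bigr => v _; rewrite mulrBr mulr1 subrK.
rewrite e1 e2.
have -> : forall p q s : P, p + q - s - 1 = p + (q - 1) - s by move=> *; ring.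
apply: goodB; first exact: Elin.
  apply: goodD; first exact: Elin.
    apply: good_sum; first exact: Elin.
    move=> v _; apply: (@goodMl R XB E r 3 3); [exact: row_sum | exact: pdeg_hPi].
  by apply: (good_weak (k := 3)) => //; apply: row_sum.
apply: good_sum; first exact: Elin.
move=> v _; apply: good_sum; first exact: Elin.
by move=> v' hv'; apply: local.
Qed.


Lemma bool_mul k1 k2 j1 j2 (a b : P) :
  good k1 (a ^+ 2 - a) -> good k2 (b ^+ 2 - b) ->
  (pdeg a <= j1)%N -> (pdeg b <= j2)%N ->
  good (maxn (k1 + 2 * j2) (k2 + j1)) ((a * b) ^+ 2 - a * b).
Proof.
move=> ha hb da db.
have -> : (a * b) ^+ 2 - a * b = (a ^+ 2 - a) * b ^+ 2 + a * (b ^+ 2 - b) by ring.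
apply: goodD; first exact: Elin.
  apply: (good_weak (k := k1 + 2 * j2)); first exact: leq_maxl.
  apply: goodMr => //; apply: leq_trans (pdegX _ _) _; lia.
apply: (good_weak (k := k2 + j1)); first exact: leq_maxr.
exact: goodMl.
Qed.

Lemma hPi_bool u v : good 6 (hPi u v ^+ 2 - hPi u v).
Proof.
case: u => [p|s]; case: v => [p'|t] /=; try (by rewrite expr0n subr0; apply: good0').
- case: ifP => _; last by rewrite expr0n subr0; apply: good0'.
  by apply: (good_weak (k := 2)) => //; apply: gA2.
- case: ifP => _; last by rewrite expr0n subr0; apply: good0'.
  rewrite /Mon !big_ord_recl big_ord0 mulr1.
  have h12 := bool_mul (gA2 (vars (sval s).1 (lift ord0 ord0)) (xorf (sval s).2 (sval t).2 (lift ord0 ord0)))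
              (gA2 (vars (sval s).1 (lift ord0 (lift ord0 ord0))) (xorf (sval s).2 (sval t).2 (lift ord0 (lift ord0 ord0))))
              (eq_leq (pdegA _ _)) (eq_leq (pdegA _ _)).
  apply: (bool_mul (k1:=2) (k2:=4) (j1:=1) (j2:=2)); [exact: gA2 | exact: h12 | exact: eq_leq (pdegA _ _) | ].
  by apply: leq_trans (pdegM _ _) _; rewrite !pdegA.
Qed.

End Main.


Section Comp.
Variables (R : realType) (T U : finType) (F : T -> polyT R U).
Hypothesis hF : forall t, (pdeg (F t) <= 3)%N.

Definition lqF : #|T|.-tuple (polyT R U) := [tuple F (enum_val i) | i < #|T|].
Definition hc (p : polyT R T) : polyT R U := comp_mpoly lqF p.

Lemma hc_ind t : hc (ind R t) = F t.
Proof.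
rewrite /hc /ind comp_mpolyXU -(tnth_nth 0) tnth_mktuple enum_rankK //.
Qed.

Lemma pdeg_hc p : (pdeg (hc p) <= 3 * pdeg p)%N.
Proof.
rewrite /hc comp_mpolyE big_seq; apply: pdeg_sum => m hm.
apply: leq_trans (pdegZ _ _) _.
apply: leq_trans (pdeg_prod _ _ _) _.
apply: (@leq_trans (\sum_(i < #|T|) (m i * 3))%N).
  apply: leq_sum => i _; apply: leq_trans (pdegX _ _) _.
  by rewrite leq_mul2l tnth_mktuple hF orbT.
rewrite -big_distrl /= -mdegE mulnC leq_mul2l /=.
have := msize_mdeg_lt hm; rewrite /pdeg; by case: (msize p).
Qed.
End Comp.

Section Even.
Variables (V : finType) (e : rel V).
Hypotheses (esym : forall x y, e x y = e y x) (eirr : irreflexive e).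
Definition sw (p : (V * V)%type) : (V * V)%type := (p.2, p.1).
Lemma swK : involutive sw. Proof. by case. Qed.

Lemma card_sym_even : ~~ odd #|[set p : (V * V)%type | e p.1 p.2]|.
Proof.
set S := [set p : (V * V)%type | e p.1 p.2].
set B := [set p : (V * V)%type | (enum_rank p.1 < enum_rank p.2)%N].
have hS : S :\: B = sw @: (S :&: B).
  rewrite (can2_imset_pre _ swK swK); apply/setP => [[a b]]; rewrite !inE /=.
  rewrite esym; case hab: (e b a) => /=; last by rewrite andbF.
  have nab : a != b by apply: contraTneq hab => ->; rewrite eirr.
  have : enum_rank a != enum_rank b by rewrite (inj_eq enum_rank_inj).
  rewrite -leqNgt; case: ltngtP => // /val_inj -> ; by rewrite eqxx.
have hc := cardsID B S. rewrite hS card_imset in hc; last exact: (can_inj swK).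
rewrite -/S -hc addnn odd_double //.
Qed.
End Even.

Section DegLB.
Variables (R : realType) (T : finType).
Lemma pdeg_lb (f : polyT R T) m : f@_m != 0 -> (mdeg m <= pdeg f)%N.
Proof.
rewrite -mcoeff_msupp => hm; have := msize_mdeg_lt hm; rewrite /pdeg; by case: (msize f).
Qed.
Lemma deg_lower (f q : polyT R T) m d : f@_m != 0 -> q != 0 ->
  (pdeg (f * q)%R <= d)%N -> (pdeg q + mdeg m <= d)%N.
Proof.
move=> hf hq; have fn0 : f != 0 by apply: contraNneq hf => ->; rewrite mcoeff0.
rewrite pdegM_eq // => h; have := pdeg_lb hf; lia.
Qed.
End DegLB.


Section Final.
Variables (R : realType) (X C : finType) (vars : C -> 'I_3 -> X) (rhs : C -> bool).
Variables (r : nat) (E : polyT R (X * bool)%type -> R).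
Hypothesis hE : xor_pseudo_exp vars rhs r E.
Notation XB := (X * bool)%type.
Notation P := (polyT R XB).
Notation VG := (gvert X rhs).
Notation VH := (gvert X (@rhs0 C)).
Notation VV := (VG * VH)%type.
Notation Q := (polyT R VV).
Notation good := (@good R XB E r).

Definition Fh (t : VV) : P := hPi R vars t.1 t.2.
Definition H : Q -> P := hc Fh.

Lemma Fh_deg t : (pdeg (Fh t) <= 3)%N. Proof. exact: pdeg_hPi. Qed.
Lemma pdegH p : (pdeg (H p) <= 3 * pdeg p)%N. Proof. exact: pdeg_hc Fh_deg p. Qed.
Lemma H_ind u v : H (ind R ((u, v) : VV)) = hPi R vars u v.
Proof. by rewrite /H hc_ind. Qed.
Lemma HM p q : H (p * q) = H p * H q. Proof. by rewrite /H /hc rmorphM. Qed.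
Lemma HD p q : H (p + q) = H p + H q. Proof. by rewrite /H /hc rmorphD. Qed.
Lemma HB p q : H (p - q) = H p - H q. Proof. by rewrite /H /hc rmorphB. Qed.
Lemma H1 : H 1 = 1. Proof. by rewrite /H /hc rmorph1. Qed.
Lemma HZ a p : H (a *: p) = a *: H p. Proof. by rewrite /H /hc comp_mpolyZ. Qed.
Lemma HC a : H a%:MP = a%:MP. Proof. by rewrite /H /hc comp_mpolyC. Qed.
Lemma Hn k : H k%:R = k%:R. Proof. by rewrite /H /hc rmorph_nat. Qed.
Lemma H0 : H 0 = 0. Proof. by rewrite /H /hc rmorph0. Qed.
Lemma HX p k : H (p ^+ k) = H p ^+ k. Proof. by rewrite /H /hc rmorphXn. Qed.
Lemma Hsum (I : Type) (s : seq I) (Pr : pred I) (G : I -> Q) :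
  H (\sum_(i <- s | Pr i) G i) = \sum_(i <- s | Pr i) H (G i).
Proof. by rewrite /H /hc rmorph_sum. Qed.

Definition I (t : VV) := enum_rank t.

Lemma coef_sq t : ((ind R t)^+2 - ind R t)@_(U_(I t) *+ 2) = 1.
Proof.
rewrite /ind mcoeffB mpolyXn !mcoeffX eqxx.
have -> : (U_(enum_rank t) == U_(enum_rank t) *+ 2)%MM = false.
  apply/negP => /eqP h; have := congr1 mdeg h; rewrite mdegMn mdeg1 //.
by rewrite subr0.
Qed.

Lemma coef_row u v0 : (\sum_v ind R ((u, v) : VV) - 1)@_(U_(I (u, v0))) = 1.
Proof.
rewrite mcoeffB mcoeff1 mnm1_eq0 subr0 raddf_sum /=.
rewrite (bigD1 v0) //= big1 ?addr0; first by rewrite /ind mcoeffXU eqxx.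
move=> v hv; rewrite /ind mcoeffXU (inj_eq enum_rank_inj).
by rewrite xpair_eqE eqxx (negbTE hv).
Qed.

Lemma coef_col u0 v : (\sum_u ind R ((u, v) : VV) - 1)@_(U_(I (u0, v))) = 1.
Proof.
rewrite mcoeffB mcoeff1 mnm1_eq0 subr0 raddf_sum /=.
rewrite (bigD1 u0) //= big1 ?addr0; first by rewrite /ind mcoeffXU eqxx.
move=> u hu; rewrite /ind mcoeffXU (inj_eq enum_rank_inj).
by rewrite xpair_eqE eqxx (negbTE hu).
Qed.


Lemma inv2 n : ((2%:R)^-1 : {mpoly R[n]}) = (2^-1)%:MP.
Proof. by rewrite -mpolyC_nat fmorphV. Qed.

Lemma sum_edges (V : finType) (e : rel V) (M : nmodType) (c : M) :
  \sum_(u : V) \sum_(u' : V | e u u') c = c *+ #|[set p : (V * V)%type | e p.1 p.2]|.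
Proof.
rewrite pair_big_dep /= -sumr_const; apply: eq_bigl => p; by rewrite inE.
Qed.

Notation eG := (gadj vars (rhs:=rhs)).
Notation eH := (gadj vars (rhs:=@rhs0 C)).

Definition Sp : Q := 2%:R^-1 * \sum_(u : VG) \sum_(u' : VG | eG u u')
   \sum_(v : VH) \sum_(v' : VH | eH v v') (ind R ((u, v) : VV) * ind R ((u', v') : VV)).

Definition NG := #|[set p : (VG * VG)%type | eG p.1 p.2]|.
Definition NH := #|[set p : (VH * VH)%type | eH p.1 p.2]|.

Lemma gadj_sym (rh : C -> bool) (u v : gvert X rh) : gadj vars u v = gadj vars v u.
Proof.
case: u => [[x a]|s]; case: v => [[y b]|t] //=.
- by rewrite (eq_sym x) (eq_sym a).
- by rewrite (eq_sym (sval s).1) (eq_sym (sval s).2).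
Qed.

Lemma gadj_irr (rh : C -> bool) : irreflexive (gadj vars (rhs:=rh)).
Proof. move=> u; case: u => [[x a]|s] /=; by rewrite !eqxx ?andbF. Qed.

Lemma NG_even : NG = (NG./2).*2.
Proof. rewrite even_halfK //; apply: card_sym_even; [exact: gadj_sym | exact: gadj_irr]. Qed.

Lemma HS_good : good 6 (H Sp - (NG./2)%:R).
Proof.
rewrite /Sp HM inv2 HC.
have -> : H (\sum_(u : VG) \sum_(u' : VG | eG u u')
   \sum_(v : VH) \sum_(v' : VH | eH v v') (ind R ((u, v) : VV) * ind R ((u', v') : VV)))
  = \sum_(u : VG) \sum_(u' : VG | eG u u')
   (\sum_(v : VH) \sum_(v' : VH | eH v v') (hPi R vars u v * hPi R vars u' v') - 1)
    + NG%:R.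
  rewrite /NG -sum_edges -big_split /=; rewrite Hsum; apply: eq_bigr => u _.
  rewrite -big_split /= Hsum; apply: eq_bigr => u' _; rewrite subrK.
  rewrite Hsum; apply: eq_bigr => v _; rewrite Hsum; apply: eq_bigr => v' _.
  by rewrite HM !H_ind.
rewrite mulrDr.
have -> : (2^-1)%:MP * (NG%:R : P) = (NG./2)%:R.
  rewrite -!mpolyC_nat -mpolyCM; congr (_%:MP).
  rewrite {1}NG_even -muln2 natrM mulrCA mulVf ?mulr1 //.
  by rewrite pnatr_eq0.
rewrite addrK mul_mpolyC; apply: goodZ; first by case: hE.
apply: good_sum; first by case: hE.
move=> u _; apply: good_sum; first by case: hE.
move=> u' hu; exact: Tsum.
Qed.


Lemma S_coef mm : mdeg mm != 2%N -> Sp@_mm = 0.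
Proof.
move=> hm; rewrite /Sp inv2 mcoeffCM; apply/eqP; rewrite mulf_eq0; apply/orP; right; apply/eqP.
rewrite raddf_sum; apply: big1 => u _; rewrite raddf_sum; apply: big1 => u' _.
rewrite raddf_sum; apply: big1 => v _; rewrite raddf_sum; apply: big1 => v' _.
rewrite /= /ind -mpolyXD mcoeffX; case: eqP => // h; exfalso.
by move: hm; rewrite -h mdegD !mdeg1.
Qed.

Lemma NH_pos : (0 < NG)%N -> (0 < NH)%N.
Proof.
rewrite /NG /NH !card_gt0 => /set0Pn [[u u'] _].
apply/set0Pn; case: u => [[x a]|s].
  by exists (inl (x, false) : VH, inl (x, true) : VH); rewrite inE /= eqxx.
set c := (sval s).1.
have pf0 : sat3 (@rhs0 C (c, [ffun _ : 'I_3 => false]).1) (c, [ffun _ : 'I_3 => false]).2.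
  by rewrite /sat3 !ffunE.
have pf1 : sat3 (@rhs0 C (c, [ffun i : 'I_3 => i != ord_max]).1) (c, [ffun i : 'I_3 => i != ord_max]).2.
  by rewrite /sat3 !ffunE.
pose P0 := fun p : (C * {ffun 'I_3 -> bool})%type => sat3 (@rhs0 C p.1) p.2.
exists (inr (exist P0 _ pf0) : VH, inr (exist P0 _ pf1) : VH); rewrite inE /= eqxx /=.
apply/eqP => /ffunP /(_ ord0); by rewrite !ffunE.
Qed.

Lemma meval_Sp : meval (fun _ => 1) Sp = 2^-1 * ((1 : R) *+ NH *+ NG).
Proof.
rewrite /Sp mevalM inv2 mevalC; congr (_ * _).
rewrite /NG -sum_edges; rewrite raddf_sum; apply: eq_bigr => u _.
rewrite raddf_sum; apply: eq_bigr => u' _; rewrite /NH -sum_edges.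
rewrite raddf_sum; apply: eq_bigr => v _; rewrite raddf_sum; apply: eq_bigr => v' _.
by rewrite /= mevalM /ind !mevalXU mulr1.
Qed.

Lemma S_deg2 : Sp - (NG./2)%:R != 0 -> (2 <= pdeg (Sp - (NG./2)%:R)%R)%N.
Proof.
move=> hn; rewrite leqNgt; apply/negP => hlt.
have S0 : Sp = 0.
  apply/mpolyP => mm; rewrite mcoeff0.
  case: (eqVneq (mdeg mm) 2%N) => hm; last exact: S_coef.
  have : (Sp - (NG./2)%:R)@_mm = 0.
    apply/eqP; apply: contraTT hlt => h; rewrite -leqNgt; apply: leq_trans (pdeg_lb h); by rewrite hm.
  rewrite mcoeffB -mpolyC_nat mcoeffC.
  have -> : (mm == 0%MM) = false by rewrite -mdeg_eq0 hm.
  by rewrite mulr0 subr0.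
move: hn; rewrite S0 sub0r oppr_eq0 => hk.
have hNG : (0 < NG)%N.
  rewrite lt0n; apply: contraNneq hk => ->; by [].
have hNH := NH_pos hNG.
have := meval_Sp; rewrite S0 meval0 => /esym /eqP.
rewrite mulf_eq0 invr_eq0 pnatr_eq0 /= -mulrnA -[1 *+ _]/((NH * NG)%N%:R) pnatr_eq0 muln_eq0.
move: hNG hNH; case: (NG) => [|a] //; case: (NH) => [|b] //.
Qed.


Lemma arith1 k a b d : (3 * d <= r)%N -> (a + k <= d)%N -> (b <= 3 * a)%N -> (b + 3 * k <= r)%N.
Proof. lia. Qed.
Lemma arith2 s a b c d : (3 * d <= r)%N -> (s + (a + a) <= d)%N -> (2 <= s)%N ->
  (c <= 2 * b)%N -> (b <= 3 * a)%N -> (c + 6 <= r)%N.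
Proof. lia. Qed.
Lemma arith3 a b d : (3 * d <= r)%N -> (2 * a <= d)%N -> (b <= 3 * a)%N -> (2 * b <= r)%N.
Proof. lia. Qed.

Lemma sat0_false : sat3 false [ffun _ : 'I_3 => false].
Proof. by rewrite /sat3 !ffunE. Qed.
Lemma sat_rh b : sat3 b [ffun i : 'I_3 => (i == ord0) && b].
Proof. by rewrite /sat3 !ffunE; case: b. Qed.

Definition pickv (u : VG) : VH :=
  match u with
  | inl p => inl p
  | inr s => inr (exist (fun p : (C * {ffun 'I_3 -> bool})%type => sat3 (@rhs0 C p.1) p.2)
                   ((sval s).1, [ffun _ : 'I_3 => false]) sat0_false)
  end.

Definition picku (v : VH) : VG :=
  match v with
  | inl p => inl p
  | inr t => inr (exist (fun p : (C * {ffun 'I_3 -> bool})%type => sat3 (rhs p.1) p.2)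
                   ((sval t).1, [ffun i : 'I_3 => (i == ord0) && rhs (sval t).1]) (sat_rh _))
  end.

Lemma iso_ok d : (3 * d <= r)%N ->
  iso_pseudo_exp (gadj vars (rhs:=rhs)) (gadj vars (rhs:=@rhs0 C)) d (fun p => E (H p)).
Proof.
move=> hd; have [Elin [E1 [Hb [Hs [Hx Hpsd]]]]] := hE.
have HE0 : E 0 = 0 by apply: E0.
have hG : forall k f q, good k f -> (pdeg q + k <= r)%N -> E (f * q) = 0 by move=> k f q g; apply: g.
rewrite /iso_pseudo_exp; cbv zeta.
split; first by move=> a p q; rewrite HD HZ; apply: Elin.
split; first by rewrite H1.
split.
  move=> u v q hq; rewrite HM HB HX H_ind.
  have [->|qn0] := eqVneq q 0; first by rewrite H0 mulr0.
  have := deg_lower (m := (U_(I (u, v)) *+ 2)%MM) _ qn0 hq.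
  rewrite coef_sq oner_neq0 mdegMn mdeg1 => /(_ isT) hq'.
  apply: (hG 6%N); first exact: hPi_bool.
  exact: arith1 hd hq' (pdegH q).
split.
  move=> u q hq; rewrite HM HB H1 Hsum.
  under eq_bigr do rewrite H_ind.
  have [->|qn0] := eqVneq q 0; first by rewrite H0 mulr0.
  have := deg_lower (m := (U_(I (u, pickv u)))%MM) _ qn0 hq.
  rewrite coef_row oner_neq0 mdeg1 => /(_ isT) hq'.
  apply: (hG 3%N); first exact: row_sum.
  exact: arith1 hd hq' (pdegH q).
split.
  move=> v q hq; rewrite HM HB H1 Hsum.
  under eq_bigr do rewrite H_ind.
  have [->|qn0] := eqVneq q 0; first by rewrite H0 mulr0.
  have := deg_lower (m := (U_(I (picku v, v)))%MM) _ qn0 hq.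
  rewrite coef_col oner_neq0 mdeg1 => /(_ isT) hq'.
  apply: (hG 3%N); first exact: col_sum.
  exact: arith1 hd hq' (pdegH q).
split.
  move=> p; rewrite /nedges -/NG -/Sp => hp.
  rewrite HM HX.
  have [->|pn0] := eqVneq p 0; first by rewrite H0 expr0n mulr0 HE0.
  have [e0|sn0] := eqVneq (Sp - (NG./2)%:R) 0; first by rewrite e0 H0 mul0r HE0.
  have p2n0 : p ^+ 2 != 0 by rewrite expf_neq0.
  move: hp; rewrite pdegM_eq // expr2 pdegM_eq // => hp.
  have := S_deg2 sn0 => hS.
  rewrite HB Hn (hG 6%N) //; first exact: HS_good.
  exact: arith2 hd hp hS (pdegX (H p) 2) (pdegH p).
move=> p hp; rewrite HX; apply: Hpsd.
exact: arith3 hd hp (pdegH p).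
Qed.

End Final.

Theorem lemma4p2 (R : realType) (X C : finType)
  (vars : C -> 'I_3 -> X) (rhs : C -> bool) (r : nat) :
  (forall c, injective (vars c)) ->
  (exists E : polyT R (X * bool)%type -> R, xor_pseudo_exp vars rhs r E) ->
  forall d : nat, (3 * d <= r)%N ->
  exists E' : polyT R (gvert X rhs * gvert X (@rhs0 C))%type -> R,
    iso_pseudo_exp (gadj vars (rhs:=rhs)) (gadj vars (rhs:=@rhs0 C)) d E'.
Proof.
move=> _ [E hE] d hd.
eexists; exact: (iso_ok hE hd).
Qed.
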